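(* Let $O=(Y,D,Z)$ be a random vector with outcome $Y\in\mathbb{R}$, exposure $D\in\mathbb{R}$, and candidate instruments $Z=(Z_1,\dots,Z_p)\in\{0,1\}^p$ (a row vector), $p\ge 2$, with $\mu^*=(\mu_1^*,\dots,\mu_p^* )=\mathbb{E}(Z)$. Suppose the following hold. (ALICE model) There are potential outcomes $Y(d,z)$ for $d\in\mathcal D$, $z\in\{0,1\}^p$, with $Y=Y(D,Z)$, and parameters $\beta^*\in\mathbb{R}$, $\zeta^*,\psi^*\in\mathbb{R}^p$ such that for all $d,d'\in\mathcal D$ and $z,z'\in\{0,1\}^p$, $$Y(d',z')-Y(d,z)=(d'-d)\beta^*+(z'-z)\zeta^*,\qquad \mathbb{E}\{Y(0,0)\mid Z\}=Z\psi^*.$$ (Independent instruments) $Z_1,\dots,Z_p$ are mutually independent. (Interaction relevance) For a fixed integer $q$ with $2\le q\le p$, the $r$-dimensional vector $$M=-\mathbb{E}\{(\bar Z_{2,\mu^*}^\top,\dots,\bar Z_{q,\mu^*}^\top)^\top D\}$$ is nonzero, where $r=\sum_{k=2}^q\binom{p}{k}$. Define the $r$-dimensional moment function $m(O;\beta,\mu^* )=(\bar Z_{2,\mu^*}^\top,\dots,\bar Z_{q,\mu^*}^\top)^\top (Y-D\beta)$. Then $\beta=\beta^*$ is the unique solution in $\beta\in\mathbb{R}$ of the population moment equation $\mathbb{E}\{m(O;\beta,\mu^* )\}=0$.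
   Context: For $1\le k\le p$ and $\mu\in\mathbb{R}^p$, $\bar Z_{k,\mu}$ denotes the column vector (in a fixed order) of all $\binom{p}{k}$ demeaned $k$-th order interactions $\prod_{j\in x}(Z_j-\mu_j)$, $x$ ranging over the subsets of $\{1,\dots,p\}$ of size $k$. All expectations appearing are assumed to exist and be finite. *)

(* Defs.v *)
From HB Require Import structures.
From mathcomp Require Import all_boot all_order all_algebra.
From mathcomp Require Import all_classical all_reals all_analysis.
Set Implicit Arguments. Unset Strict Implicit. Unset Printing Implicit Defensive.
Import Order.TTheory GRing.Theory Num.Theory.
Local Open Scope classical_set_scope.
Local Open Scope ring_scope.

Definition zdot (R : realType) (p : nat) (z : {ffun 'I_p -> bool}) (v : 'I_p -> R) : R :=
  \sum_(j < p) (z j)%:R * v j.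

Definition interaction (R : realType) (p : nat) (x : {set 'I_p})
  (mu : 'I_p -> R) (z : {ffun 'I_p -> bool}) : R :=
  \prod_(j in x) ((z j)%:R - mu j).

(* index set of the stacked vector (Zbar_2^T, ..., Zbar_q^T)^T :
   all subsets x of {1..p} with 2 <= |x| <= q *)
Definition interaction_index (p q : nat) : {set {set 'I_p}} :=
  finset (fun x : {set 'I_p} => (2 <= #|x|)%N && (#|x| <= q)%N).

(* mutual independence of the binary random variables Z_1, ..., Z_p:
   product rule for all events {Z_j in A_j} (taking A_j = setT gives
   every subfamily) *)
Definition mutually_independent d (T : measurableType d) (R : realType)
  (P : probability T R) (p : nat) (Z : T -> {ffun 'I_p -> bool}) : Prop :=
  forall A : 'I_p -> set bool,
    P (\bigcap_(j in [set: 'I_p]) [set w | A j (Z w j)]) =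
    (\prod_(j < p) P [set w | A j (Z w j)])%E.

(* E{ X | Z } = g(Z) for a finitely-valued Z: the defining property of the
   conditional expectation w.r.t. sigma(Z) (generated by the atoms {Z = z}) *)
Definition cond_exp_given_Z_is d (T : measurableType d) (R : realType)
  (P : probability T R) (p : nat) (Z : T -> {ffun 'I_p -> bool})
  (X : T -> R) (g : {ffun 'I_p -> bool} -> R) : Prop :=
  P.-integrable setT (EFin \o X) /\
  forall z : {ffun 'I_p -> bool},
    (\int[P]_w (X w * (Z w == z)%:R)%:E = (g z)%:E * P [set w | Z w = z])%E.

(* Main.v *)
Require Import Defs.
From HB Require Import structures.
From mathcomp Require Import all_boot all_order all_algebra.
From mathcomp Require Import all_classical all_reals all_analysis.
From mathcomp Require Import measurable_realfun.
From mathcomp Require Import lra ring.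
Import Order.TTheory GRing.Theory Num.Theory.
Local Open Scope classical_set_scope.
Local Open Scope ring_scope.

Section S.
Context d (T : measurableType d) (R : realType) (P : probability T R) (p : nat)
  (Z : T -> {ffun 'I_p -> bool}).
Hypothesis mZ : forall j, measurable_fun setT (fun w => ((Z w j)%:R : R)).

Lemma mZj j (b : bool) : measurable [set w | Z w j = b].
Proof.
have := mZ j measurableT _ (measurable_set1 (b%:R : R)); rewrite setTI.
congr measurable; apply/seteqP; split => w /=.
  by case: (Z w j); case: b => //= /eqP; rewrite ?oner_eq0 // eq_sym oner_eq0.
by move=> ->.
Qed.

Lemma eZE z : [set w | Z w = z] = \bigcap_(j in [set: 'I_p]) [set w | Z w j = z j].
Proof.
apply/seteqP; split => w /=; first by move=> Hw j _ /=; rewrite Hw.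
by move=> H; apply/ffunP => j; exact: H.
Qed.

Lemma mZe z : measurable [set w | Z w = z].
Proof.
rewrite eZE; apply: fin_bigcap_measurable => // j _; exact: mZj.
Qed.

Lemma indZ z w : ((Z w == z)%:R : R) = \1_[set w | Z w = z] w.
Proof.
rewrite indicE; case: eqP => H; first by rewrite mem_set.
by rewrite memNset.
Qed.

Lemma fin_P (A : set T) : measurable A -> P A \is a fin_num.
Proof.
move=> mA; rewrite ge0_fin_numE ?measure_ge0 //.
exact: le_lt_trans (probability_le1 P mA) (ltry _).
Qed.

Lemma int_ind (X : T -> R) z : P.-integrable setT (EFin \o X) ->
  P.-integrable setT (fun w => (X w * (Z w == z)%:R)%:E).
Proof.
move=> iX; apply: (le_integrable measurableT _ _ iX) => //.
  apply/measurable_EFinP; apply: measurable_funM.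
    exact/measurable_EFinP/(measurable_int _ iX).
  under eq_fun do rewrite indZ; exact: measurable_indic (mZe z).
move=> w _ /=; rewrite lee_fin normrM; case: eqP => _; rewrite ?normr1 ?mulr1 //.
by rewrite normr0 mulr0.
Qed.

Lemma ptw (X : T -> R) (g : {ffun 'I_p -> bool} -> R) w :
  (X w * g (Z w))%:E = (\sum_(z : {ffun 'I_p -> bool}) (g z)%:E * (X w * (Z w == z)%:R)%:E)%E.
Proof.
rewrite (bigD1 (Z w)) //= eqxx mulr1 big1 ?adde0; last first.
  by move=> z /negbTE; rewrite eq_sym => ->; rewrite mulr0 mule0.
by rewrite EFinM muleC.
Qed.
Lemma dummy : True. Proof.
by [].
Qed.

Lemma int_g (X : T -> R) (g : {ffun 'I_p -> bool} -> R) :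
  P.-integrable setT (EFin \o X) ->
  P.-integrable setT (fun w => (X w * g (Z w))%:E).
Proof.
move=> iX; under eq_fun do rewrite ptw.
apply: integrable_sum => // z _; apply: integrableZl => //. exact: (int_ind X z iX).
Qed.

Lemma L1 (X : T -> R) (g : {ffun 'I_p -> bool} -> R) :
  P.-integrable setT (EFin \o X) ->
  (\int[P]_w (X w * g (Z w))%:E =
   \sum_(z : {ffun 'I_p -> bool}) (g z)%:E * \int[P]_w (X w * (Z w == z)%:R)%:E)%E.
Proof.
move=> iX; under eq_integral do rewrite ptw.
rewrite integral_sum //; last by move=> z; apply: integrableZl => //; exact: (int_ind X z iX).
by apply: eq_bigr => z _; rewrite integralZl //; exact: (int_ind X z iX).
Qed.


Hypothesis indep : mutually_independent P Z.
Variable mu : 'I_p -> R.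
Hypothesis hmu : forall j, (\int[P]_w ((Z w j)%:R : R)%:E = (mu j)%:E)%E.

Definition q i (b : bool) := fine (P [set w | Z w i = b]).

Lemma qE i b : P [set w | Z w i = b] = (q i b)%:E.
Proof. by rewrite fineK // fin_P //; exact: mZj. Qed.

Lemma PeZ z : P [set w | Z w = z] = (\prod_i q i (z i))%:E.
Proof.
rewrite eZE (indep (fun j b => b = z j)) -prodEFin.
by apply: eq_bigr => i _; exact: qE.
Qed.

Lemma qsum i : q i true + q i false = 1.
Proof.
have : P ([set w | Z w i = true] `|` [set w | Z w i = false]) = 1%E.
  rewrite (_ : _ `|` _ = setT) ?probability_setT //.
  by apply/seteqP; split => w //= _; case: (Z w i); [left|right].
have disj : [set w | Z w i = true] `&` [set w | Z w i = false] = set0.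
  by apply/seteqP; split => w //= [->].
rewrite measureU ?disj //; try exact: mZj.
move=> h; apply: EFin_inj; rewrite EFinD -(qE i true) -(qE i false); exact: h.
Qed.

Lemma qmu i : q i true = mu i.
Proof.
have := hmu i.
rewrite (eq_integral (fun w => (\1_[set w | Z w i = true] w)%:E)); last first.
  by move=> w _; rewrite indicE; case E: (Z w i) => /=; [rewrite mem_set|rewrite memNset //= E].
rewrite integral_indic ?setIT //; last exact: mZj. move=> h; apply: EFin_inj; rewrite -(qE i true); exact: h.
Qed.

Lemma K (x : {set 'I_p}) j : (2 <= #|x|)%N ->
  \sum_(z : {ffun 'I_p -> bool}) (interaction x mu z * (z j)%:R) * \prod_i q i (z i) = 0.
Proof.
move=> hx.
have [k kx] : exists k, k \in x :\ j.
  apply/set0Pn; rewrite -card_gt0; move: hx; rewrite (cardsD1 j x).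
  by case: (j \in x) => /=; case: #|x :\ j|.
rewrite in_setD1 in kx; case/andP: kx => kj kx.
pose F i (b : bool) : R := (if i \in x then (b%:R - mu i) else 1) *
   (if i == j then b%:R else 1) * q i b.
transitivity (\sum_(z : {ffun 'I_p -> bool}) \prod_i F i (z i)).
  apply: eq_bigr => z _; rewrite /F !big_split /=; congr (_ * _ * _).
    by rewrite /interaction big_mkcond.
  by rewrite -big_mkcond big_pred1_eq.
rewrite -bigA_distr_bigA (bigD1 k) //=.
apply/eqP; rewrite mulf_eq0; apply/orP; left; apply/eqP.
rewrite big_bool /= /F kx (negbTE kj) !mulr1.
have := qsum k; rewrite qmu => hq.
have -> : q k false = 1 - mu k by rewrite -hq addrC addKr.
rewrite /= ?mulr1n ?mulr0n; ring.
Qed.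

Definition zd (z : {ffun 'I_p -> bool}) (v : 'I_p -> R) := zdot z v.

Lemma K2 (x : {set 'I_p}) c : (2 <= #|x|)%N ->
  \sum_(z : {ffun 'I_p -> bool}) (interaction x mu z * zdot z c) * \prod_i q i (z i) = 0.
Proof.
move=> hx.
transitivity (\sum_(j < p) c j * \sum_(z : {ffun 'I_p -> bool})
     (interaction x mu z * (z j)%:R) * \prod_i q i (z i)).
  under [RHS]eq_bigr do rewrite mulr_sumr.
  rewrite [RHS]exchange_big /=.
  apply: eq_bigr => z _.
  rewrite /zdot mulr_sumr mulr_suml; apply: eq_bigr => j _; ring.
by rewrite big1 // => j _; rewrite K // mulr0.
Qed.

Lemma Lint1 g : (\int[P]_w (g (Z w))%:E = (\sum_z g z * \prod_i q i (z i))%:E)%E.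
Proof.
have i1 : P.-integrable setT (EFin \o (fun _ : T => (1:R))).
  exact: finite_measure_integrable_cst.
under eq_integral do rewrite -[g _]mul1r.
rewrite L1 // -sumEFin; apply: eq_bigr => z _.
rewrite EFinM; congr (_ * _)%E.
under eq_integral do rewrite mul1r indZ.
rewrite integral_indic ?setIT //; last exact: mZe.
exact: PeZ.
Qed.

Variables (Y D : T -> R) (Dset : set R) (Ypot : R -> {ffun 'I_p -> bool} -> T -> R)
  (beta_star : R) (zeta psi : 'I_p -> R).
Hypotheses (iD : P.-integrable setT (EFin \o D)) (D0 : 0 \in Dset)
  (Dw : forall w, D w \in Dset) (Yw : forall w, Y w = Ypot (D w) (Z w) w)
  (alice : forall dd dd' z z' w, dd \in Dset -> dd' \in Dset ->
      Ypot dd' z' w - Ypot dd z w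
      = (dd' - dd) * beta_star + \sum_(j < p) ((z' j)%:R - (z j)%:R) * zeta j)
  (ce : cond_exp_given_Z_is P Z (Ypot 0 [ffun => false]) (fun z => zdot z psi)).

Lemma main_formula (x : {set 'I_p}) (beta : R) : (2 <= #|x|)%N ->
  (\int[P]_w (interaction x mu (Z w) * (Y w - D w * beta))%:E =
   (beta_star - beta)%:E * \int[P]_w (interaction x mu (Z w) * D w)%:E)%E.
Proof.
move=> hx.
set Y0 := Ypot 0 [ffun => false].
have iY0 : P.-integrable setT (EFin \o Y0) by case: ce.
have i1 : P.-integrable setT (EFin \o (fun _ : T => (1:R))).
  exact: finite_measure_integrable_cst.
have hY w : Y w - D w * beta = Y0 w + zdot (Z w) zeta * 1 + (beta_star - beta) * D w.
  have := alice 0 (D w) [ffun => false] (Z w) w D0 (Dw w); rewrite -Yw => h.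
  have hs : \sum_(j < p) ((Z w j)%:R - ([ffun => false] j)%:R) * zeta j = zdot (Z w) zeta.
    by rewrite /zdot; apply: eq_bigr => j _; rewrite ffunE /= subr0.
  rewrite hs subr0 in h.
  have -> : Y w = Y0 w + (D w * beta_star + zdot (Z w) zeta) by rewrite -h addrC subrK.
  ring.
pose gI := fun z => interaction x mu z.
pose gz := fun z => interaction x mu z * zdot z zeta.
rewrite (eq_integral (fun w => (Y0 w * gI (Z w))%:E + ((1 * gz (Z w))%:E +
   (beta_star - beta)%:E * (D w * gI (Z w))%:E)))%E; last first.
  by move=> w _; rewrite hY -!EFinM -!EFinD /gI /gz; congr EFin; ring.
rewrite integralD //; last 2 first.
- exact: int_g.
- apply: integrableD => //; first exact: (int_g (fun=> 1) gz i1).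
  by apply: integrableZl => //; exact: int_g.
rewrite integralD //; last 2 first.
- exact: (int_g (fun=> 1) gz i1).
- by apply: integrableZl => //; exact: int_g.
rewrite integralZl //; last exact: int_g.
have -> : (\int[P]_w (Y0 w * gI (Z w))%:E = 0)%E.
  rewrite L1 //.
  under eq_bigr do rewrite ce.2 PeZ -!EFinM.
  rewrite sumEFin; congr EFin.
  under eq_bigr do rewrite mulrA.
  exact: K2.
have -> : (\int[P]_w (1 * gz (Z w))%:E = 0)%E.
  under eq_integral do rewrite mul1r.
  rewrite Lint1; congr EFin; exact: K2.
rewrite !add0e; congr (_ * _)%E; apply: eq_integral => w _; by rewrite mulrC.
Qed.

End S.

Theorem theorem1 (d : measure_display) (T : measurableType d) (R : realType)
  (P : probability T R) (p q : nat)
  (Y D : T -> R) (Z : T -> {ffun 'I_p -> bool})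
  (Dset : set R) (Ypot : R -> {ffun 'I_p -> bool} -> T -> R)
  (beta_star : R) (zeta psi mu : 'I_p -> R) :
  (2 <= p)%N ->
  (* Z_j measurable, mu* = E(Z) *)
  (forall j, measurable_fun setT (fun w => ((Z w j)%:R : R))) ->
  (forall j, (\int[P]_w ((Z w j)%:R : R)%:E = (mu j)%:E)%E) ->
  (* integrability of Y and D *)
  P.-integrable setT (EFin \o Y) ->
  P.-integrable setT (EFin \o D) ->
  (* ALICE model *)
  0 \in Dset ->
  (forall w, D w \in Dset) ->
  (forall w, Y w = Ypot (D w) (Z w) w) ->
  (forall dd dd' z z' w, dd \in Dset -> dd' \in Dset ->
      Ypot dd' z' w - Ypot dd z w
      = (dd' - dd) * beta_star + \sum_(j < p) ((z' j)%:R - (z j)%:R) * zeta j) ->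
  cond_exp_given_Z_is P Z (Ypot 0 [ffun => false]) (fun z => zdot z psi) ->
  (* independent instruments *)
  mutually_independent P Z ->
  (* interaction relevance: M <> 0 *)
  (2 <= q)%N -> (q <= p)%N ->
  (exists2 x, x \in interaction_index p q &
     (- \int[P]_w (interaction x mu (Z w) * D w)%:E)%E <> 0%E) ->
  (* beta* is the unique solution of E m(O; beta, mu* ) = 0 *)
  forall beta : R,
    (forall x, x \in interaction_index p q ->
       (\int[P]_w (interaction x mu (Z w) * (Y w - D w * beta))%:E)%E = 0%E)
    <-> beta = beta_star.
Proof.
move=> hp mZ hmu iY iD D0 Dw Yw alice ce indep hq hqp [x0 x0in hx0] beta.
have mf := @main_formula d T R P p Z mZ indep mu hmu Y D Dset Ypot beta_star zeta psi iD D0 Dw Yw alice ce.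
have card2 x : x \in interaction_index p q -> (2 <= #|x|)%N.
  by rewrite inE => /andP[].
split.
- move=> H; have := H x0 x0in; rewrite mf ?card2 // => /eqP.
  rewrite mule_eq0 => /orP[/eqP [] /eqP|/eqP J0].
    by rewrite subr_eq0 => /eqP ->.
  by exfalso; apply: hx0; rewrite J0 oppe0.
- by move=> -> x xin; rewrite mf ?card2 // subrr mul0e.
Qed.
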